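(* Let $p>1$ and $q>p-1$ with $q>0$, and let $f_{p,q}(t)=\sum_{j=1}^\infty j^{-p}\exp(i t j^q)$ for $t\in\mathbb{R}$. Then there is a constant $C<\infty$ such that for all $t,h\in\mathbb{R}$, $$|f_{p,q}(t+h)-f_{p,q}(t)|\le C|h|^{\alpha},\qquad \alpha=\frac{p-1}{q}.$$ *)

(* Defs.v *)
(* classical reals. Complex numbers are represented by
   their real and imaginary parts. *)
From Stdlib Require Export Reals.
Open Scope R_scope.

(* j-th term (j = n+1 >= 1) of f_{p,q}(t) = sum_{j>=1} j^{-p} exp(i t j^q):
   real part j^{-p} cos(t j^q), imaginary part j^{-p} sin(t j^q). *)
Definition term_re (p q t : R) (n : nat) : R :=
  Rpower (INR (S n)) (- p) * cos (t * Rpower (INR (S n)) q).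
Definition term_im (p q t : R) (n : nat) : R :=
  Rpower (INR (S n)) (- p) * sin (t * Rpower (INR (S n)) q).

Definition cmod (a b : R) : R := sqrt (a ^ 2 + b ^ 2).

(* Main.v *)
Require Import Defs.
From Stdlib Require Import Reals Lra Lia ZArith.
Open Scope R_scope.

Lemma rpow_pos x e : 0 < Rpower x e.
Proof. unfold Rpower; apply exp_pos. Qed.

Lemma rpow1 e : Rpower 1 e = 1.
Proof. unfold Rpower; rewrite ln_1, Rmult_0_r; apply exp_0. Qed.

Lemma rpow_le_neg a b c : c <= 0 -> 0 < a <= b -> Rpower b c <= Rpower a c.
Proof.
  intros Hc Hab.
  replace c with (- (- c)) by ring.
  rewrite (Rpower_Ropp b (-c)), (Rpower_Ropp a (-c)).
  apply Rinv_le_contravar; [apply rpow_pos|].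
  apply Rle_Rpower_l; lra.
Qed.

Lemma mvt_pow e y : 0 < y -> exists xi, y < xi < y + 1 /\
  Rpower (y+1) e - Rpower y e = e * Rpower xi (e - 1).
Proof.
  intros Hy.
  destruct (MVT_cor2 (fun s => Rpower s e) (fun s => e * Rpower s (e-1)) y (y+1))
    as [c [Hc1 Hc2]]; [lra| |].
  - intros c Hc. apply derivable_pt_lim_power. lra.
  - exists c. split; [lra|]. rewrite Hc1. ring.
Qed.

Lemma tel_tail p y : 1 < p -> 1 <= y ->
  (p-1) * Rpower (y+1) (-p) <= Rpower y (1-p) - Rpower (y+1) (1-p).
Proof.
  intros Hp Hy.
  destruct (mvt_pow (1-p) y) as [xi [Hxi E]]; [lra|].
  replace (1 - p - 1) with (-p) in E by ring.
  assert (Rpower (y+1) (-p) <= Rpower xi (-p)) by (apply rpow_le_neg; lra).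
  assert (Rpower y (1-p) - Rpower (y+1) (1-p) = (p-1) * Rpower xi (-p)) by lra.
  rewrite H0. apply Rmult_le_compat_l; lra.
Qed.

Lemma tel_head r y : -1 < r < 0 -> 1 <= y ->
  (r+1) * Rpower (y+1) r <= Rpower (y+1) (r+1) - Rpower y (r+1).
Proof.
  intros Hr Hy.
  destruct (mvt_pow (r+1) y) as [xi [Hxi E]]; [lra|].
  replace (r + 1 - 1) with r in E by ring.
  assert (Rpower (y+1) r <= Rpower xi r) by (apply rpow_le_neg; lra).
  rewrite E. apply Rmult_le_compat_l; lra.
Qed.

Lemma INR_S_ge1 n : 1 <= INR (S n).
Proof. rewrite S_INR. pose proof (pos_INR n). lra. Qed.

Lemma head_sum r N0 : -1 < r ->
  sum_f_R0 (fun n => Rpower (INR (S n)) r) N0 <= (1 + /(r+1)) * Rpower (INR (S N0)) (r+1).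
Proof.
  intros Hr.
  assert (Hi : 0 < /(r+1)) by (apply Rinv_0_lt_compat; lra).
  pose proof (rpow_pos (INR (S N0)) (r+1)) as Hpos.
  destruct (Rle_lt_dec 0 r) as [Hr0|Hr0].
  - assert (H : sum_f_R0 (fun n => Rpower (INR (S n)) r) N0 <= INR (S N0) * Rpower (INR (S N0)) r).
    { clear Hpos. induction N0 as [|N IH].
      - simpl sum_f_R0; replace (INR 1) with 1 by reflexivity. rewrite rpow1. lra.
      - rewrite tech5; cbv beta.
        assert (Rpower (INR (S N)) r <= Rpower (INR (S (S N))) r).
        { apply Rle_Rpower_l; [lra|]. split; [pose proof (INR_S_ge1 N); lra|].
          apply le_INR; lia. }
        assert (E: INR (S (S N)) * Rpower (INR (S (S N))) r = INR (S N) * Rpower (INR (S (S N))) r + Rpower (INR (S (S N))) r) by (rewrite (S_INR (S N)) at 1; ring).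
        pose proof (rpow_pos (INR (S N)) r).
        pose proof (INR_S_ge1 N).
        assert (INR (S N) * Rpower (INR (S N)) r <= INR (S N) * Rpower (INR (S (S N))) r)
          by (apply Rmult_le_compat_l; lra).
        lra. }
    replace (Rpower (INR (S N0)) (r+1)) with (INR (S N0) * Rpower (INR (S N0)) r).
    + pose proof (rpow_pos (INR (S N0)) r). pose proof (INR_S_ge1 N0).
      assert (0 <= /(r+1) * (INR (S N0) * Rpower (INR (S N0)) r)).
      { apply Rmult_le_pos; [lra|]. apply Rmult_le_pos; lra. }
      lra.
    + rewrite Rplus_comm, Rpower_plus, Rpower_1; [ring|].
      pose proof (INR_S_ge1 N0); lra.
  - assert (H : sum_f_R0 (fun n => Rpower (INR (S n)) r) N0 <= /(r+1) * Rpower (INR (S N0)) (r+1)).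
    { clear Hpos. induction N0 as [|N IH].
      - simpl sum_f_R0; replace (INR 1) with 1 by reflexivity. rewrite !rpow1.
        assert (1 < /(r+1)).
        { rewrite <- Rinv_1. apply Rinv_lt_contravar; lra. }
        lra.
      - rewrite tech5; cbv beta.
        pose proof (tel_head r (INR (S N)) (conj Hr Hr0) (INR_S_ge1 N)) as T.
        rewrite <- S_INR in T.
        assert (Rpower (INR (S (S N))) r <= /(r+1) * (Rpower (INR (S (S N))) (r + 1) - Rpower (INR (S N)) (r + 1))).
        { apply (Rmult_le_reg_l (r+1)); [lra|].
          rewrite <- Rmult_assoc, Rinv_r; lra. }
        lra. }
    assert (0 <= Rpower (INR (S N0)) (r+1)) by lra.
    nra.
Qed.

Lemma sum_mono_nonneg (A : nat -> R) M k : (forall n, 0 <= A n) ->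
  sum_f_R0 A M <= sum_f_R0 A (M + k).
Proof.
  intros HA. induction k as [|k IH].
  - rewrite Nat.add_0_r; lra.
  - rewrite Nat.add_succ_r, tech5. specialize (HA (S (M+k))). lra.
Qed.

Lemma split_sum p (w A : nat -> R) N0 : 1 < p -> (forall n, 0 <= A n) ->
  (forall n, (n <= N0)%nat -> w n <= A n) ->
  (forall n, (N0 < n)%nat -> w n <= 2 * Rpower (INR (S n)) (-p)) ->
  forall M, sum_f_R0 w M <= sum_f_R0 A N0 + 2/(p-1) * Rpower (INR (S N0)) (1-p).
Proof.
  intros Hp HA H1 H2 M.
  assert (Hc : 0 < 2/(p-1)) by (apply Rdiv_lt_0_compat; lra).
  assert (Ht : 0 <= 2/(p-1) * Rpower (INR (S N0)) (1-p))
    by (apply Rmult_le_pos; [lra| left; apply rpow_pos]).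
  destruct (Compare_dec.le_lt_dec M N0) as [HM|HM].
  - assert (sum_f_R0 w M <= sum_f_R0 A M) by (apply sum_Rle; intros; apply H1; lia).
    pose proof (sum_mono_nonneg A M (N0 - M) HA).
    replace (M + (N0 - M))%nat with N0 in H0 by lia. lra.
  - assert (K : forall k, sum_f_R0 w (N0 + k) <= sum_f_R0 A N0 +
       2/(p-1) * (Rpower (INR (S N0)) (1-p) - Rpower (INR (S (N0+k))) (1-p))).
    { induction k as [|k IH].
      - rewrite Nat.add_0_r. replace (Rpower (INR (S N0)) (1 - p) - Rpower (INR (S N0)) (1 - p)) with 0 by ring.
        rewrite Rmult_0_r, Rplus_0_r. apply sum_Rle; intros; apply H1; lia.
      - rewrite Nat.add_succ_r, tech5.
        pose proof (H2 (S (N0 + k)) ltac:(lia)) as Hw.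
        pose proof (tel_tail p (INR (S (N0 + k))) Hp (INR_S_ge1 _)) as T.
        rewrite <- S_INR in T.
        assert (2 * Rpower (INR (S (S (N0 + k)))) (- p) <= 2/(p-1) * (Rpower (INR (S (N0 + k))) (1 - p) - Rpower (INR (S (S (N0 + k)))) (1 - p))).
        { unfold Rdiv. rewrite Rmult_assoc. apply Rmult_le_compat_l; [lra|].
          apply (Rmult_le_reg_l (p-1)); [lra|].
          rewrite <- Rmult_assoc, Rinv_r; lra. }
        lra. }
    pose proof (K (M - N0)%nat) as K'.
    replace (N0 + (M - N0))%nat with M in K' by lia.
    pose proof (rpow_pos (INR (S M)) (1-p)).
    assert (0 <= 2/(p-1) * Rpower (INR (S M)) (1-p)) by (apply Rmult_le_pos; lra).
    lra.
Qed.

Lemma series_diff (f g w : nat -> R) a c B : infinite_sum f a -> infinite_sum g c ->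
  (forall n, Rabs (f n - g n) <= w n) -> (forall M, sum_f_R0 w M <= B) -> Rabs (a - c) <= B.
Proof.
  intros Hf Hg Hw HB.
  destruct (Rle_lt_dec (Rabs (a - c)) B) as [H|H]; [exact H|exfalso].
  set (eps := (Rabs (a - c) - B)/2).
  assert (He : eps > 0) by (unfold eps; lra).
  destruct (Hf eps He) as [N1 HN1]. destruct (Hg eps He) as [N2 HN2].
  specialize (HN1 (max N1 N2) ltac:(lia)). specialize (HN2 (max N1 N2) ltac:(lia)).
  unfold Rdist in *.
  set (n := max N1 N2) in *.
  assert (Rabs (sum_f_R0 f n - sum_f_R0 g n) <= B).
  { rewrite <- minus_sum. eapply Rle_trans; [apply sum_f_R0_triangle|].
    eapply Rle_trans; [|apply (HB n)]. apply sum_Rle. intros; apply Hw. }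
  assert (Rabs (a - c) <= Rabs (sum_f_R0 f n - a) + Rabs (sum_f_R0 f n - sum_f_R0 g n) + Rabs (sum_f_R0 g n - c)).
  { replace (a - c) with (-(sum_f_R0 f n - a) + (sum_f_R0 f n - sum_f_R0 g n) + (sum_f_R0 g n - c)) by ring.
    eapply Rle_trans; [apply Rabs_triang|].
    rewrite <- (Rabs_Ropp (sum_f_R0 f n - a)).
    pose proof (Rabs_triang (- (sum_f_R0 f n - a)) (sum_f_R0 f n - sum_f_R0 g n)). lra. }
  unfold eps in *. lra.
Qed.

Lemma lip F F' : (forall x, derivable_pt_lim F x (F' x)) -> (forall x, Rabs (F' x) <= 1) ->
  forall A B, Rabs (F A - F B) <= Rabs (A - B).
Proof.
  intros HD Hb.
  assert (K : forall A B, B < A -> Rabs (F A - F B) <= Rabs (A - B)).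
  { intros A B HAB. destruct (MVT_cor2 F F' B A HAB (fun c _ => HD c)) as [c [E _]].
    rewrite E, Rabs_mult. pose proof (Hb c). pose proof (Rabs_pos (A - B)).
    rewrite <- (Rmult_1_l (Rabs (A - B))) at 2. apply Rmult_le_compat_r; lra. }
  intros A B. destruct (Rtotal_order A B) as [H|[H|H]].
  - rewrite (Rabs_minus_sym (F A)), (Rabs_minus_sym A). apply K; lra.
  - subst. replace (F B - F B) with 0 by ring. rewrite Rabs_R0. apply Rabs_pos.
  - apply K; lra.
Qed.

Lemma floor_ex y : 1 <= y -> exists N0 : nat, INR (S N0) <= y < INR (S N0) + 1.
Proof.
  intros Hy. destruct (base_Int_part y) as [H1 H2].
  set (k := Int_part y) in *.
  assert (Hk : (1 <= k)%Z).
  { assert (0 < IZR k) by lra. apply lt_IZR in H. lia. }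
  exists (Z.to_nat k - 1)%nat.
  replace (S (Z.to_nat k - 1)) with (Z.to_nat k) by lia.
  rewrite INR_IZR_INZ, Z2Nat.id by lia. lra.
Qed.

Definition tm (F : R -> R) (p q s : R) (n : nat) : R :=
  Rpower (INR (S n)) (- p) * F (s * Rpower (INR (S n)) q).

Lemma term_bounds F p q t h n :
  (forall A B, Rabs (F A - F B) <= Rabs (A - B)) -> (forall x, Rabs (F x) <= 1) ->
  Rabs (tm F p q (t+h) n - tm F p q t n) <= 2 * Rpower (INR (S n)) (-p) /\
  Rabs (tm F p q (t+h) n - tm F p q t n) <= Rpower (INR (S n)) (q-p) * Rabs h.
Proof.
  intros HL HB. unfold tm.
  set (J := INR (S n)).
  pose proof (rpow_pos J (-p)) as Hp.
  rewrite <- Rmult_minus_distr_l, Rabs_mult, (Rabs_pos_eq (Rpower J (-p))) by lra.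
  split.
  - pose proof (Rabs_triang (F ((t + h) * Rpower J q)) (- F (t * Rpower J q))).
    rewrite Rabs_Ropp in H. fold (Rminus (F ((t + h) * Rpower J q)) (F (t * Rpower J q))) in H.
    pose proof (HB ((t + h) * Rpower J q)). pose proof (HB (t * Rpower J q)).
    rewrite Rmult_comm. apply Rmult_le_compat_r; lra.
  - eapply Rle_trans.
    + apply Rmult_le_compat_l; [lra|]. apply HL.
    + replace ((t + h) * Rpower J q - t * Rpower J q) with (h * Rpower J q) by ring.
      rewrite Rabs_mult, (Rabs_pos_eq (Rpower J q)) by (left; apply rpow_pos).
      replace (q - p) with (q + - p) by ring. rewrite Rpower_plus. right; ring.
Qed.

Definition C0 (p q : R) : R :=
  (1 + /(q - p + 1)) + 2/(p-1) * Rpower (/2) (1-p) + 2 + 2/(p-1).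

Lemma comp_bound F p q t h a c : 1 < p -> p - 1 < q -> 0 < q ->
  (forall A B, Rabs (F A - F B) <= Rabs (A - B)) -> (forall x, Rabs (F x) <= 1) ->
  infinite_sum (tm F p q (t+h)) a -> infinite_sum (tm F p q t) c ->
  Rabs (a - c) <= C0 p q * Rpower (Rabs h) ((p-1)/q).
Proof.
  intros Hp Hq1 Hq0 HL HB Ha Hc.
  set (x := Rabs h).
  set (al := (p-1)/q).
  assert (Hi : 0 < /(q - p + 1)) by (apply Rinv_0_lt_compat; lra).
  assert (Hc2 : 0 < 2/(p-1)) by (apply Rdiv_lt_0_compat; lra).
  pose proof (rpow_pos (/2) (1-p)) as HD.
  assert (HDp : 0 < 2/(p-1) * Rpower (/2) (1-p)) by (apply Rmult_lt_0_compat; lra).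
  assert (HC0 : 0 < C0 p q) by (unfold C0; lra).
  pose proof (rpow_pos x al) as Hxa.
  set (w := fun n => Rabs (tm F p q (t+h) n - tm F p q t n)).
  assert (Hw : forall n, Rabs (tm F p q (t+h) n - tm F p q t n) <= w n) by (intros; unfold w; lra).
  pose proof (fun n => term_bounds F p q t h n HL HB) as TB.
  destruct (Req_dec x 0) as [Hx0|Hx0].
  - assert (h = 0) by (unfold x in Hx0; destruct (Req_dec h 0); auto; exfalso; apply (Rabs_no_R0 h); auto).
    apply Rle_trans with 0; [|nra].
    apply (series_diff _ _ w a c 0 Ha Hc Hw).
    intros M. eapply Rle_trans with (sum_f_R0 (fun _ => 0) M).
      * apply sum_Rle. intros n _. destruct (TB n) as [_ T2]. unfold w.
        subst h. rewrite Rabs_R0, Rmult_0_r in T2. exact T2.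
      * clear. induction M; simpl; lra.
  - assert (Hx00 : 0 <= x) by apply Rabs_pos.
    assert (Hxp : 0 < x) by (destruct Hx00 as [Hx00|Hx00]; [exact Hx00| exfalso; apply Hx0; auto]).
    destruct (Rle_lt_dec 1 x) as [Hx1|Hx1].
    + apply Rle_trans with (2 + 2/(p-1)).
      { apply (series_diff _ _ w a c (2 + 2/(p-1)) Ha Hc Hw).
        intros M.
        pose proof (split_sum p w (fun n => 2 * Rpower (INR (S n)) (-p)) 0 Hp
          ltac:(intros; pose proof (rpow_pos (INR (S n)) (-p)); lra)
          ltac:(intros; apply TB) ltac:(intros; apply TB) M) as Ss.
        simpl sum_f_R0 in Ss. replace (INR 1) with 1 in Ss by reflexivity.
        rewrite !rpow1 in Ss. lra. }
      assert (1 <= Rpower x al).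
        { rewrite <- (Rpower_O x) by lra. apply Rle_Rpower; auto.
          unfold al. left; apply Rdiv_lt_0_compat; lra. }
        unfold C0. nra.
    + set (y := Rpower x (- / q)).
      assert (Hy : 1 <= y).
      { unfold y, Rpower. assert (ln x < 0) by (rewrite <- ln_1; apply ln_increasing; lra).
        assert (0 < - / q * ln x).
        { assert (0 < /q) by (apply Rinv_0_lt_compat; lra). nra. }
        pose proof (exp_ineq1_le (- / q * ln x)). lra. }
      destruct (floor_ex y Hy) as [N0 [HN1 HN2]].
      set (Nr := INR (S N0)) in *.
      pose proof (INR_S_ge1 N0) as HNr. fold Nr in HNr.
      set (r := q - p).
      apply Rle_trans with (x * ((1 + /(r+1)) * Rpower Nr (r+1)) + 2/(p-1) * Rpower Nr (1-p)).
      { apply (series_diff _ _ w a c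
        (x * ((1 + /(r+1)) * Rpower Nr (r+1)) + 2/(p-1) * Rpower Nr (1-p)) Ha Hc Hw).
        intros M.
        pose proof (split_sum p w (fun n => Rpower (INR (S n)) r * x) N0 Hp
          ltac:(intros; pose proof (rpow_pos (INR (S n)) r); nra)
          ltac:(intros; apply TB) ltac:(intros; apply TB) M) as Ss.
        rewrite <- scal_sum in Ss. fold Nr in Ss.
        pose proof (head_sum r N0 ltac:(unfold r; lra)) as HS. fold Nr in HS.
        assert (x * sum_f_R0 (fun n => Rpower (INR (S n)) r) N0 <= x * ((1 + / (r + 1)) * Rpower Nr (r + 1)))
          by (apply Rmult_le_compat_l; lra).
        lra. }
      { assert (E1 : x * Rpower Nr (r+1) <= Rpower x al).
        { assert (Rpower Nr (r+1) <= Rpower y (r+1)) by (apply Rle_Rpower_l; unfold r; lra).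
          unfold y in H. rewrite Rpower_mult in H.
          replace (Rpower x al) with (Rpower x 1 * Rpower x (- / q * (r + 1))).
          - rewrite Rpower_1 by lra. apply Rmult_le_compat_l; lra.
          - rewrite <- Rpower_plus. f_equal. unfold al, r. field. lra. }
        assert (E2 : Rpower Nr (1-p) <= Rpower (/2) (1-p) * Rpower x al).
        { assert (Rpower Nr (1-p) <= Rpower (y * /2) (1-p)) by (apply rpow_le_neg; lra).
          rewrite <- Rpower_mult_distr in H by lra.
          unfold y in H. rewrite Rpower_mult in H.
          replace (- / q * (1 - p)) with al in H by (unfold al; field; lra).
          lra. }
        assert (E3 : 2/(p-1) * Rpower Nr (1-p) <= 2/(p-1) * (Rpower (/2) (1-p) * Rpower x al))
          by (apply Rmult_le_compat_l; lra).
        assert (E4 : x * ((1 + / (r + 1)) * Rpower Nr (r + 1)) <= (1 + / (r + 1)) * Rpower x al).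
        { replace (x * ((1 + / (r + 1)) * Rpower Nr (r + 1))) with ((1 + / (r + 1)) * (x * Rpower Nr (r + 1))) by ring.
          apply Rmult_le_compat_l; [unfold r in *; lra| exact E1]. }
        unfold C0. unfold r in *.
        assert (0 <= (2 + 2/(p-1)) * Rpower x al) by (apply Rmult_le_pos; lra).
        nra. }
Qed.

Lemma cmod_le u v : cmod u v <= Rabs u + Rabs v.
Proof.
  unfold cmod.
  pose proof (Rabs_pos u). pose proof (Rabs_pos v).
  rewrite <- (sqrt_pow2 (Rabs u + Rabs v)) by lra.
  apply sqrt_le_1_alt.
  rewrite <- (pow2_abs u), <- (pow2_abs v). nra.
Qed.

Theorem mainTheorem9 (p q : R) (hp : 1 < p) (hq1 : p - 1 < q) (hq0 : 0 < q) :
  exists C : R,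
    forall t h : R, forall a b c d : R,
      infinite_sum (term_re p q (t + h)) a ->
      infinite_sum (term_im p q (t + h)) b ->
      infinite_sum (term_re p q t) c ->
      infinite_sum (term_im p q t) d ->
      cmod (a - c) (b - d) <= C * Rpower (Rabs h) ((p - 1) / q).
Proof.
  exists (C0 p q + C0 p q).
  intros t h a b c d Ha Hb Hc Hd.
  assert (Lc : forall A B, Rabs (cos A - cos B) <= Rabs (A - B)).
  { apply (lip cos (fun x => - sin x)); [apply derivable_pt_lim_cos|].
    intros x; rewrite Rabs_Ropp; apply Rabs_le; apply SIN_bound. }
  assert (Ls : forall A B, Rabs (sin A - sin B) <= Rabs (A - B)).
  { apply (lip sin cos); [apply derivable_pt_lim_sin|].
    intros x; apply Rabs_le; apply COS_bound. }
  assert (Bc : forall x, Rabs (cos x) <= 1) by (intros; apply Rabs_le; apply COS_bound).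
  assert (Bs : forall x, Rabs (sin x) <= 1) by (intros; apply Rabs_le; apply SIN_bound).
  pose proof (comp_bound cos p q t h a c hp hq1 hq0 Lc Bc Ha Hc).
  pose proof (comp_bound sin p q t h b d hp hq1 hq0 Ls Bs Hb Hd).
  pose proof (cmod_le (a - c) (b - d)).
  lra.
Qed.
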